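(* Let $P=\{\bm{x}_1,\dots,\bm{x}_N\}$ be a population of $N$ solutions and let $\pi:\{1,\dots,N\}\to\{1,\dots,N\}$ be a bijection satisfying $\forall i\neq j:\ \bm{x}_i\succ_{\mathrm{c}}\bm{x}_j \Rightarrow \pi(i)<\pi(j)$. Consider one application of stochastic tournament selection to $P$ (with the winner being the picked solution of smallest $\pi$-value). Then: (i) every solution $\bm{x}_i\in P$ is selected with probability at least $1/N^2$; (ii) for every constant $c\ge 1$ there is a constant $\delta>0$ (independent of $N$) such that every $\bm{x}_i\in P$ with $\pi(i)\le c$ is selected with probability at least $\delta$.
   Context: Crowded comparison: each solution $\bm{x}$ of a population has a rank $\mathrm{rank}(\bm{x})$ (index of its non-dominated front) and a crowding distance $\mathrm{dist}(\bm{x})$; $\bm{x}\succ_{\mathrm{c}}\bm{y}$ means $\mathrm{rank}(\bm{x})<\mathrm{rank}(\bm{y})$, or $\mathrm{rank}(\bm{x})=\mathrm{rank}(\bm{y})$ and $\mathrm{dist}(\bm{x})>\mathrm{dist}(\bm{y})$. Stochastic tournament selection on a population $P$ of size $N$: choose $k$ uniformly at random from $\{1,2,\dots,N\}$, then pick $k$ solutions from $P$ independently and uniformly at random with replacement, and output the picked solution that is best, i.e. the one with smallest $\pi$-value, where $\pi$ is a bijection as in the claim (solutions with identical rank and crowding distance receive their relative $\pi$-order uniformly at random). *)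

(* Defs.v *)
(* with extended reals (crowding distance may be +oo). *)
From HB Require Import structures.
From mathcomp Require Import all_boot all_order all_algebra all_fingroup.
From mathcomp Require Import reals constructive_ereal.
Set Implicit Arguments. Unset Strict Implicit. Unset Printing Implicit Defensive.
Import Order.TTheory GRing.Theory Num.Theory.
Local Open Scope ring_scope.

(* Population P = {x_1,...,x_N} indexed by 'I_N; each solution has a rank
   (index of its non-dominated front) and a crowding distance in \bar R. *)

Definition crowded_better (R : realType) (N : nat)
  (rank : 'I_N -> nat) (dist : 'I_N -> \bar R) (i j : 'I_N) : Prop :=
  (rank i < rank j)%N \/ (rank i = rank j /\ (dist j < dist i)%E).

Definition pi_compatible (R : realType) (N : nat)
  (rank : 'I_N -> nat) (dist : 'I_N -> \bar R) (pi : {perm 'I_N}) : Prop :=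
  forall i j : 'I_N, i != j -> crowded_better rank dist i j -> (pi i < pi j)%N.

Definition tour_winner (N k : nat) (pi : {perm 'I_N})
  (t : {ffun 'I_k -> 'I_N}) (i : 'I_N) : bool :=
  (i \in codom t) && [forall j : 'I_k, (pi i <= pi (t j))%N].

(* probability that a k-tournament (k picks uniformly with replacement)
   outputs solution i *)
Definition tour_prob (R : realType) (N k : nat) (pi : {perm 'I_N}) (i : 'I_N) : R :=
  (#|[set t : {ffun 'I_k -> 'I_N} | tour_winner pi t i]|)%:R / (N ^ k)%:R.

(* stochastic tournament selection: k uniform in {1,...,N} *)
Definition sel_prob (R : realType) (N : nat) (pi : {perm 'I_N}) (i : 'I_N) : R :=
  (N%:R)^-1 * \sum_(k < N) tour_prob R k.+1 pi i.

(* Main.v *)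
Require Import Defs.
From HB Require Import structures.
From mathcomp Require Import all_boot all_order all_algebra all_fingroup.
From mathcomp Require Import reals constructive_ereal.
From mathcomp Require Import zify ring lra.
Import Order.TTheory GRing.Theory Num.Theory.
Local Open Scope ring_scope.

Lemma foldr_prod k (f : 'I_k -> nat) : foldr muln 1%N [seq f x | x : 'I_k] = (\prod_(l < k) f l)%N.
Proof.
rewrite -[LHS]/(foldr muln 1%N (map f (enum 'I_k))).
have -> : foldr muln 1%N (map f (enum 'I_k)) = (\prod_(x <- map f (enum 'I_k)) x)%N.
  by rewrite unlock; elim: (map f _) => //= a s ->.
by rewrite big_map big_enum.
Qed.

Lemma cardA N k (U : {set 'I_N}) (i : 'I_N) (j : 'I_k) :
  #|[set t : {ffun 'I_k -> 'I_N} | (t j == i) && [forall l, (l != j) ==> (t l \in U)]]|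
  = (#|U| ^ k.-1)%N.
Proof.
pose F := fun l : 'I_k => if l == j then [set i] else U.
have -> : #|[set t : {ffun 'I_k -> 'I_N} | (t j == i) && [forall l, (l != j) ==> (t l \in U)]]|
   = #|family F|.
  apply: eq_card => t; rewrite inE; apply/andP/familyP.
    move=> [/eqP tj /forallP H] l; rewrite /F; case: eqP => [->|/eqP ne].
      by rewrite inE tj.
    by have := H l; rewrite ne.
  move=> H; split.
    by have := H j; rewrite /F eqxx inE.
  apply/forallP => l; apply/implyP => ne; have := H l; by rewrite /F (negbTE ne).
rewrite card_family foldr_prod (bigD1 j) //= /F eqxx cards1 mul1n.
rewrite (eq_bigr (fun _ => #|U|)); last by move=> l /negbTE ->.
by rewrite prod_nat_const cardC1 card_ord.
Qed.

Lemma count_lb N k (pi : {perm 'I_N}) (i : 'I_N) :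
  (k * #|[set x | (pi i < pi x)%N]| ^ k.-1 <=
    #|[set t : {ffun 'I_k -> 'I_N} | tour_winner pi t i]|)%N.
Proof.
set U := [set x | (pi i < pi x)%N].
pose A := fun j : 'I_k => [set t : {ffun 'I_k -> 'I_N} | (t j == i) && [forall l, (l != j) ==> (t l \in U)]].
have -> : (k * #|U| ^ k.-1 = \sum_(j < k) #|A j|)%N.
  rewrite (eq_bigr (fun _ => #|U| ^ k.-1)%N); last by move=> j _; rewrite cardA.
  by rewrite sum_nat_const card_ord.
have E : forall B : {set {ffun 'I_k -> 'I_N}}, #|B| = (\sum_t (t \in B))%N.
  by move=> B; rewrite -sum1_card big_mkcond /=; apply: eq_bigr => t _; case: (t \in B).
rewrite (eq_bigr (fun j => \sum_t (t \in A j))%N); last by move=> j _; rewrite E.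
rewrite exchange_big E /=; apply: leq_sum => t _.
have Uni : forall j, i \notin U by move=> j; rewrite inE ltnn.
case: (pickP (fun j => t \in A j)) => [j tA|none]; last first.
  by rewrite big1 // => j _; rewrite none.
rewrite (bigD1 j) //= tA big1 /=.
  rewrite addn0; move: tA; rewrite !inE => /andP [/eqP tj /forallP H].
  rewrite /tour_winner -tj codom_f /=.
  rewrite lt0b; apply/forallP => l.
  case: (eqVneq l j) => [->//|lj].
  by have := H l; rewrite lj /= inE tj => /ltnW.
move=> l lj; move: tA; rewrite inE => /andP [/eqP tj /forallP H].

suff -> : (t \in A l) = false by [].
apply: negbTE; rewrite inE negb_and; apply/orP; right.
rewrite negb_forall; apply/existsP; exists j; rewrite negb_imply eq_sym lj /=.
by rewrite tj inE ltnn.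
Qed.

Lemma card_gt N (a : nat) : #|[set y : 'I_N | (a < y)%N]| = (N - a.+1)%N.
Proof.
rewrite -sum1_card big_mkcond /=.
rewrite (eq_bigr (fun y : 'I_N => nat_of_bool (a < y)%N)); last by move=> y _; rewrite inE; case: ltnP.
elim: N => [|N IH]; first by rewrite big_ord0.
rewrite big_ord_recr /= IH; case: ltnP => H /=; lia.
Qed.

Lemma cardU N (pi : {perm 'I_N}) (i : 'I_N) :
  #|[set x | (pi i < pi x)%N]| = (N - (pi i).+1)%N.
Proof.
have -> : [set x | (pi i < pi x)%N] = pi @^-1: [set y : 'I_N | (pi i < y)%N].
  by apply/setP => x; rewrite !inE.
by rewrite card_preimset ?card_gt //; exact: perm_inj.
Qed.

Lemma tp_lb (R : realType) N k (pi : {perm 'I_N}) (i : 'I_N) :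
  (k * (N - (pi i).+1) ^ k.-1)%:R / (N ^ k)%:R <= tour_prob R k pi i.
Proof.
rewrite /tour_prob ler_wpM2r // ?invr_ge0 ?ler0n // ler_nat -cardU.
exact: count_lb.
Qed.

Lemma tp_ge0 (R : realType) N k (pi : {perm 'I_N}) (i : 'I_N) : 0 <= tour_prob R k pi i.
Proof. by rewrite /tour_prob divr_ge0 ?ler0n. Qed.

Lemma bernoulli (R : realType) (x : R) n : 0 <= x <= 1 -> 1 - n%:R * x <= (1 - x) ^+ n.
Proof.
move=> /andP [x0 x1]; elim: n => [|n IH]; first by rewrite mul0r subr0 expr0.
rewrite exprS -natr1.
have h1 : 0 <= 1 - x by lra.
have := ler_wpM2l h1 IH.
have : 0 <= n%:R * x * x by rewrite !mulr_ge0 ?ler0n.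
move=> h2 h3; nra.
Qed.

Lemma gauss (R : realType) n : (n ^ 2)%:R / 2 <= \sum_(K < n) (K.+1)%:R :> R.
Proof.
elim: n => [|n IH]; first by by rewrite big_ord0 mul0r.
rewrite big_ord_recr /=.
rewrite !natrX -[n.+1%:R]natr1.
set S := \sum_(K < n) _.
have -> : (n%:R + 1) ^+ 2 / 2 = n%:R ^+ 2 / 2 + n%:R + 1 / 2 :> R by field.
move: IH; rewrite -/S; lra.
Qed.

Lemma part1 (R : realType) N (pi : {perm 'I_N}) (i : 'I_N) :
  (N ^ 2)%:R^-1 <= sel_prob R pi i.
Proof.
case: N pi i => [|N] pi i; first by case: i.
rewrite /sel_prob.
have h : (N.+1%:R)^-1 <= \sum_(k < N.+1) tour_prob R k.+1 pi i.
  rewrite (bigD1 ord0) //=.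
  have := @tp_lb R _ 1 pi i; rewrite mul1n expn0 expn1 div1r => h1.
  have : 0 <= \sum_(k < N.+1 | k != ord0) tour_prob R k.+1 pi i.
    by apply: sumr_ge0 => k _; exact: tp_ge0.
  by move=> h2; apply: (le_trans h1); rewrite lerDl.
rewrite natrX -exprVn expr2 ler_wpM2l // invr_ge0 ler0n //.
Qed.

Lemma final_ineq (R : realType) (n a c : R) : 0 < n -> 1 <= c -> 0 <= a -> n <= 2 * a * c ->
  (16 * c ^+ 2)^-1 <= a ^+ 2 / (4 * n ^+ 2).
Proof.
move=> n0 c1 a0 h.
have c0 : 0 < 16 * c ^+ 2 by nra.
have d0 : 0 < 4 * n ^+ 2 by nra.
rewrite ler_pdivlMr // mulrC ler_pdivrMr //.
have : 0 <= 2 * a * c - n by lra.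
nra.
Qed.

Lemma aux (R : realType) (k q n : nat) : (0 < n)%N -> (2 * (k * q) <= n)%N ->
  k%:R * (q%:R / n%:R) <= 1 / 2 :> R.
Proof.
move=> n0 h.
rewrite mulrA ler_pdivrMr ?ltr0n // -natrM.
have : (2 * (k * q))%:R <= n%:R :> R by rewrite ler_nat.
rewrite natrM; lra.
Qed.

Lemma term_lb (R : realType) N (pi : {perm 'I_N}) (i : 'I_N) K :
  (K * (2 * (pi i).+1) <= N)%N ->
  (K.+1)%:R / (2 * N%:R) <= tour_prob R K.+1 pi i.
Proof.
move=> hK.
set q := (pi i).+1.
have qN : (q <= N)%N by exact: ltn_ord.
have N0 : (0 < N)%N by apply: leq_trans qN.
have n0 : 0 < N%:R :> R by rewrite ltr0n.
apply: (le_trans _ (@tp_lb R N K.+1 pi i)).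
rewrite /= natrM !natrX natrB // exprS.
set n := N%:R; set qr := q%:R.
have -> : (K.+1%:R * (n - qr) ^+ K / (n * n ^+ K)) = K.+1%:R / n * ((1 - qr / n) ^+ K).
  have -> : 1 - qr / n = (n - qr) / n by field; rewrite gt_eqF.
  rewrite expr_div_n; field; rewrite ?gt_eqF ?exprn_gt0 //.
have hx : 0 <= qr / n <= 1.
  apply/andP; split; first by rewrite divr_ge0 ?ler0n // ltW.
  by rewrite ler_pdivrMr // mul1r ler_nat.
have := @bernoulli R _ K hx.
have hb : K%:R * (qr / n) <= 1 / 2.
  apply: aux => //; move: hK; rewrite /q; lia.
move=> hB.
have hy : 1/2 <= (1 - qr / n) ^+ K by lra.
have -> : K.+1%:R / (2 * n) = K.+1%:R / n * (1 / 2) by field; rewrite gt_eqF.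
by rewrite ler_wpM2l // divr_ge0 ?ler0n ?ltW.
Qed.

Lemma part2 (R : realType) (c : R) N (pi : {perm 'I_N}) (i : 'I_N) :
  1 <= c -> ((pi i).+1)%:R <= c -> (16 * c ^+ 2)^-1 <= sel_prob R pi i.
Proof.
move=> c1 hc.
set q := (pi i).+1.
have qN : (q <= N)%N by exact: ltn_ord.
have q0 : (0 < 2 * q)%N by [].
have N0 : (0 < N)%N by apply: leq_trans qN.
set L := (N %/ (2 * q))%N.
have hL1 : (L * (2 * q) <= N)%N by exact: leq_trunc_div.
have hL2 : (N < L.+1 * (2 * q))%N by exact: ltn_ceil.
have hLN : (L.+1 <= N)%N by move: hL1 N0; rewrite /q; nia.
have n0 : 0 < N%:R :> R by rewrite ltr0n.
have hsum : \sum_(K < L.+1) (K.+1)%:R / (2 * N%:R) <= \sum_(K < N) tour_prob R K.+1 pi i.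
  rewrite (big_ord_widen N (fun K => (K.+1)%:R / (2 * N%:R))) // big_mkcond /=.
  apply: ler_sum => K _; case: ifP => hK; last exact: tp_ge0.
  apply: term_lb; apply: leq_trans hL1; rewrite leq_mul2r; apply/orP; right; by rewrite -ltnS.
rewrite -mulr_suml in hsum.
have hg := gauss R L.+1.
have hge : 0 <= (2 * N%:R : R)^-1 by rewrite invr_ge0; lra.
have h3 := ler_wpM2r hge hg.
rewrite /sel_prob.
have h4 := le_trans h3 hsum.
have hN : 0 <= N%:R^-1 :> R by rewrite invr_ge0 ltW.
have h5 := ler_wpM2l hN h4.
suff H : (16 * c ^+ 2)^-1 <= N%:R^-1 * ((L.+1 ^ 2)%:R / 2 / (2 * N%:R)) by exact: le_trans H h5.
have -> : N%:R^-1 * ((L.+1 ^ 2)%:R / 2 / (2 * N%:R)) = (L.+1)%:R ^+ 2 / (4 * N%:R ^+ 2) :> R.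
  by rewrite natrX; field; rewrite gt_eqF.
apply: final_ineq => //.
have : (N%:R < (L.+1 * (2 * q))%:R :> R) by rewrite ltr_nat.
rewrite !natrM.
have : 0 <= (L.+1)%:R :> R by [].
move: hc; rewrite -/q => hc h1 h2.
nra.
Qed.

Theorem lemma1 (R : realType) :
  (forall (N : nat) (rank : 'I_N -> nat) (dist : 'I_N -> \bar R)
          (pi : {perm 'I_N}),
      pi_compatible rank dist pi ->
      forall i : 'I_N, (N ^ 2)%:R^-1 <= sel_prob R pi i)
  /\
  (forall c : R, 1 <= c ->
     exists delta : R, 0 < delta /\
       forall (N : nat) (rank : 'I_N -> nat) (dist : 'I_N -> \bar R)
              (pi : {perm 'I_N}),
         pi_compatible rank dist pi ->
         forall i : 'I_N, ((pi i).+1)%:R <= c -> delta <= sel_prob R pi i).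
Proof.
split.
  by move=> N rank dist pi _ i; exact: part1.
move=> c c1; exists (16 * c ^+ 2)^-1; split.
  by rewrite invr_gt0; nra.
by move=> N rank dist pi _ i hc; exact: part2.
Qed.
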